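(* Let $M=M_n\to\infty$ as $n\to\infty$. Assume that (i) the combining function is of the form $\psi(p_1,\dots,p_r)=\sum_{j=1}^r w_j\varphi(p_j)$ with weights $w_j>0$, where $\varphi$ is decreasing, non-negative and one-to-one from $(0,1)$ to $(0,\infty)$; (ii) there exists $j_0\in\{1,\dots,r\}$ such that the null hypothesis $H_0^{(j_0)}$ does not hold and $\Pr(T_{n,j_0}^{[1]}\ge T_{n,j_0})\to0$; (iii) for every $j\in\{1,\dots,r\}$, the bootstrap replicates $T_{n,j}^{[1]},\dots,T_{n,j}^{[M_n]}$ contain no ties. Then $p_{n,M_n}(W_{n,M_n}^{[0]})\to0$ in probability.
   Context: Setting: Let $\mathbf{X}_n$ denote the available data. For $j\in\{1,\dots,r\}$, let $T_{n,j}=T_{n,j}(\mathbf{X}_n)$ be real-valued test statistics, large values of $T_{n,j}$ providing evidence against a null hypothesis $H_0^{(j)}$; let $\mathbf{T}_n=(T_{n,1},\dots,T_{n,r})$. Let $\mathbf{V}_n^{[1]},\mathbf{V}_n^{[2]},\dots$ be i.i.d. random vectors representing the additional randomness of a resampling mechanism (independent of the data) and let $\mathbf{T}_n^{[i]}=(T_{n,1}^{[i]},\dots,T_{n,r}^{[i]})=\mathbf{T}_n^{[i]}(\mathbf{X}_n,\mathbf{V}_n^{[i]})$, $i\ge1$, be bootstrap replicates of $\mathbf{T}_n$; set $\mathbf{T}_n^{[0]}=\mathbf{T}_n$. For an integer $M$, $i\in\{0,\dots,M\}$, $j\in\{1,\dots,r\}$, $$p_{n,M}(T_{n,j}^{[i]})=\frac{1}{M+1}\Big\{\frac12+\sum_{k=1}^M\mathbf{1}(T_{n,j}^{[k]}\ge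 T_{n,j}^{[i]})\Big\},\qquad W_{n,M}^{[i]}=\psi\{p_{n,M}(T_{n,1}^{[i]}),\dots,p_{n,M}(T_{n,r}^{[i]})\},$$ and $p_{n,M}(W_{n,M}^{[0]})=\frac1M\sum_{k=1}^M\mathbf{1}(W_{n,M}^{[k]}\ge W_{n,M}^{[0]})$. *)

(* Defs.v *)
From HB Require Import structures.
From mathcomp Require Import all_boot all_order all_algebra.
From mathcomp Require Import all_classical all_reals all_analysis.
Set Implicit Arguments. Unset Strict Implicit. Unset Printing Implicit Defensive.
Import Order.TTheory GRing.Theory Num.Theory.
Local Open Scope classical_set_scope.
Local Open Scope ring_scope.

Definition pval_stat (R : realType) (M : nat) (t : nat -> R) (x : R) : R :=
  (2^-1 + \sum_(1 <= k < M.+1) (nat_of_bool (x <= t k))%:R) / (M.+1)%:R.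

(* W_{n,M}^{[i]} = psi(p_{n,M}(T_{n,1}^{[i]}), ..., p_{n,M}(T_{n,r}^{[i]})),
   where Tall k j = T_{n,j}^{[k]} (k = 0 is the original statistic). *)
Definition Wstat (R : realType) (r M : nat) (psi : ('I_r -> R) -> R)
  (Tall : nat -> 'I_r -> R) (i : nat) : R :=
  psi (fun j => pval_stat M (fun k => Tall k j) (Tall i j)).

Definition pval_W (R : realType) (M : nat) (Wv : nat -> R) : R :=
  (\sum_(1 <= k < M.+1) (nat_of_bool (Wv 0%N <= Wv k))%:R) / M%:R.

Definition lin_comb (R : realType) (r : nat) (w : 'I_r -> R) (phi : R -> R)
  (p : 'I_r -> R) : R := \sum_(j < r) w j * phi (p j).

Definition indep_data_boot (dO : measure_display) (Om : measurableType dO)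
  (R : realType) (P : probability Om R)
  (dX : measure_display) (XT : measurableType dX)
  (dV : measure_display) (VT : measurableType dV)
  (X : Om -> XT) (V : nat -> Om -> VT) : Prop :=
  forall (A : set XT) (B : nat -> set VT) (s : seq nat),
    measurable A -> (forall k, measurable (B k)) -> uniq s ->
    all (fun k => 0 < k)%N s ->
    P (X @^-1` A `&` \bigcap_(k in [set` s]) (V k @^-1` B k)) =
    (P (X @^-1` A) * \prod_(k <- s) P (V k @^-1` B k))%E.

Definition ident_distr_boot (dO : measure_display) (Om : measurableType dO)
  (R : realType) (P : probability Om R)
  (dV : measure_display) (VT : measurableType dV) (V : nat -> Om -> VT) : Prop :=
  forall (k : nat) (B : set VT), (0 < k)%N -> measurable B ->
    P (V k @^-1` B) = P (V 1%N @^-1` B).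

Definition boot_family (Om XT VT : Type) (R : realType) (r : nat)
  (Tstat : XT -> 'I_r -> R) (Tboot : XT -> VT -> 'I_r -> R)
  (X : Om -> XT) (V : nat -> Om -> VT) (w : Om) : nat -> 'I_r -> R :=
  fun k j => if k == 0%N then Tstat (X w) j else Tboot (X w) (V k w) j.

(* Main.v *)
Require Import Defs.
From mathcomp Require Import measurable_realfun.
From HB Require Import structures.
From mathcomp Require Import all_boot all_order all_algebra.
From mathcomp Require Import all_classical all_reals all_analysis.
Import Order.TTheory GRing.Theory Num.Theory.
Local Open Scope classical_set_scope.
Local Open Scope ring_scope.

Section eqlaw.
Context d (Om : measurableType d) (R : realType) (P : probability Om R) dX (XT : measurableType dX) dV (VT: measurableType dV) (X : Om -> XT) (V1 Vk : Om -> VT).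
Hypotheses (mX : measurable_fun setT X) (mV1 : measurable_fun setT V1) (mVk : measurable_fun setT Vk).
Hypothesis rect : forall A B, measurable A -> measurable B ->
  P (X @^-1` A `&` V1 @^-1` B) = P (X @^-1` A `&` Vk @^-1` B).
Let f1 := fun w => (X w, V1 w).
Let mf1 : measurable_fun setT f1 := measurable_fun_pair mX mV1.
Let fk := fun w => (X w, Vk w).
Let mfk : measurable_fun setT fk := measurable_fun_pair mX mVk.
Let m1 : {measure set (XT * VT) -> \bar R} := measure_function_pushforward__canonical__measure_function_Measure P mf1.
Let mk : {measure set (XT * VT) -> \bar R} := measure_function_pushforward__canonical__measure_function_Measure P mfk.
Lemma eqlaw (S : set (XT*VT)) : measurable S -> P (f1 @^-1` S) = P (fk @^-1` S).
Proof.
move=> mS.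
pose C : set (set (XT * VT)) :=
  [set C | exists A, measurable A /\ exists B, measurable B /\ C = A `*` B].
have CI : setI_closed C.
  move=> /= _ _ [X1 [mX1 [X2 [mX2 ->]]]] [Y1 [mY1 [Y2 [mY2 ->]]]].
  rewrite -setXI; exists (X1 `&` Y1); split; first exact: measurableI.
  by exists (X2 `&` Y2); split => //; exact: measurableI.
have := (measure_unique C (fun _ => setT) _ CI _ _ m1 mk _ _ S mS).
apply.
- rewrite measurable_prod_measurableType //; congr (<<s _ >>).
  rewrite predeqE; split => [[A mA [B mB <-]]|[A [mA [B [mB ->]]]]].
    by exists A; split => //; exists B.
  by exists A => //; exists B.
- move=> _; exists setT; split => //; exists setT; split => //.
  by rewrite setXTT.
- by rewrite bigcup_const.
- move=> _ [A [mA [B [mB ->]]]].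
  rewrite /m1 /mk /= /pushforward.
  have -> : f1 @^-1` (A `*` B) = X @^-1` A `&` V1 @^-1` B by [].
  have -> : fk @^-1` (A `*` B) = X @^-1` A `&` Vk @^-1` B by [].
  exact: rect.
- move=> _; rewrite /m1 /= /pushforward preimage_setT probability_setT.
  exact: ltry.
Qed.
End eqlaw.

Lemma bitsG_measurable d (Om : measurableType d) (I : Type) (B : I -> set Om)
  (mB : forall i, measurable (B i)) (s : seq I) (G : seq bool -> bool) :
  measurable [set om | G (map (fun i => `[< B i om >]) s)].
Proof.
elim: s G => [|i s IH] G /=.
  case: (G [::]).
    by rewrite (_ : [set _ | true] = setT); [exact: measurableT| by rewrite predeqE].
  by rewrite (_ : [set _ | false] = set0); [exact: measurable0| by rewrite predeqE].
rewrite (_ : [set _ | _] = (B i `&` [set om | G (true :: map (fun i => `[< B i om >]) s)]) `|`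
   (~` B i `&` [set om | G (false :: map (fun i => `[< B i om >]) s)])).
  apply: measurableU; apply: measurableI.
  - exact: mB.
  - exact: (IH (fun bs => G (true :: bs))).
  - exact: measurableC.
  - exact: (IH (fun bs => G (false :: bs))).
rewrite predeqE => om /=; case: (asboolP (B i om)) => h; split.
- by move=> ?; left.
- by case=> -[].
- by move=> ?; right.
- by case=> -[].
Qed.

Lemma bits_measurable d (Om : measurableType d) (I : eqType) (B : I -> set Om)
  (mB : forall i, measurable (B i)) (s : seq I) (Q : Om -> Prop) :
  (forall om om', (forall i, i \in s -> (B i om <-> B i om')) -> Q om -> Q om') ->
  measurable [set om | Q om].
Proof.
move=> HQ.
pose bits om := map (fun i => `[< B i om >]) s.
pose G bs := `[< exists om, bits om = bs /\ Q om >].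
rewrite (_ : [set om | Q om] = [set om | G (bits om)]); first exact: bitsG_measurable.
rewrite predeqE => om /=; split.
  by move=> Qom; apply/asboolP; exists om.
move/asboolP => [om' [eb Qom']]; apply: (HQ om') => // i iin.
have /eq_in_map /(_ i iin) /= := eb.
move=> e; split => h.
  by move: e; rewrite (asboolT h) => /esym/asboolP.
by move: e; rewrite (asboolT h) => /asboolP.
Qed.

Lemma seq_argmin (R : realType) (s : seq nat) (P : pred nat) (t : nat -> R) :
  has P s -> exists k, [/\ k \in s, P k & forall l, l \in s -> P l -> t k <= t l].
Proof.
elim: s => [//|a s IH] /=.
case Pa: (P a) => /=.
  case hs: (has P s).
    have [k [ks Pk Hk]] := IH hs.
    have [hak|hak] := lerP (t a) (t k).
      exists a; split => //; first by rewrite inE eqxx.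
      move=> l; rewrite inE => /orP [/eqP -> //|ls Pl].
      exact: le_trans hak (Hk l ls Pl).
    exists k; split => //; first by rewrite inE ks orbT.
    move=> l; rewrite inE => /orP [/eqP -> |ls Pl]; first by move=> _; exact: ltW.
    exact: Hk.
  exists a; split => //; first by rewrite inE eqxx.
  move=> l; rewrite inE => /orP [/eqP -> //|ls Pl].
  by move/negbT/hasPn: hs => /(_ l ls); rewrite Pl.
move=> hs; have [k [ks Pk Hk]] := IH hs.
exists k; split => //; first by rewrite inE ks orbT.
move=> l; rewrite inE => /orP [/eqP -> |ls Pl]; first by rewrite Pa.
exact: Hk.
Qed.

Lemma sum_ind_le (R : realType) (s : seq nat) (b : nat -> bool) :
  \sum_(k <- s) (nat_of_bool (b k))%:R <= (size s)%:R :> R.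
Proof.
elim: s => [|a s IH]; first by rewrite big_nil.
rewrite big_cons /= -addn1 natrD addrC lerD //.
by case: (b a).
Qed.

Lemma sum_ind_ge0 (R : realType) (s : seq nat) (b : nat -> bool) :
  0 <= \sum_(k <- s) (nat_of_bool (b k))%:R :> R.
Proof. by apply: sumr_ge0 => k _; case: (b k). Qed.

Lemma count_le (R : realType) (m : nat) (t : nat -> R) (K : R) :
  let S := \sum_(1 <= k < m.+1)
      (nat_of_bool (\sum_(1 <= l < m.+1) (nat_of_bool (t k <= t l))%:R <= K))%:R in
  S = 0 \/ S <= K.
Proof.
move=> S.
pose P k := \sum_(1 <= l < m.+1) (nat_of_bool (t k <= t l))%:R <= K.
case hs: (has P (index_iota 1 m.+1)); last first.
  left; rewrite /S big1_seq // => k /= ks.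
  by move/negbT/hasPn: hs => /(_ k ks); rewrite /P => /negbTE ->.
right; have [k [ks Pk Hk]] := @seq_argmin R _ _ t hs.
apply: le_trans Pk; rewrite /S.
rewrite big_seq [X in _ <= X]big_seq; apply: ler_sum => l ls.
rewrite /P in Hk; case Pl: (_ <= K) => /=; last by case: (t k <= t l).
by rewrite (Hk l ls Pl).
Qed.

From mathcomp Require Import ring lra.

Lemma size_iota1 m : size (index_iota 1 m.+1) = m.
Proof. by rewrite /index_iota size_iota subn1. Qed.

Lemma pv_bounds (R : realType) m (t : nat -> R) x :
  0 < pval_stat m t x < 1.
Proof.
rewrite /pval_stat; set c := \sum_(_ <= _ < _) _.
have c0 : 0 <= c by apply: sum_ind_ge0.
have cm : c <= m%:R by rewrite -[X in X%:R](size_iota1 m); apply: sum_ind_le.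
have m0 : 0 < (m.+1)%:R :> R by rewrite ltr0n.
apply/andP; split; first by apply: divr_gt0 => //; lra.
rewrite ltr_pdivrMr // mul1r -natr1.
have h2 : (1+1)^-1 < 1 :> R by rewrite invf_lt1 // ?ltr1n //; lra.
lra.
Qed.

Lemma pv_count (R : realType) m (t : nat -> R) (x1 : R) : 0 < x1 ->
  \sum_(1 <= k < m.+1) (nat_of_bool (pval_stat m t (t k) <= x1))%:R <= x1 * (m.+1)%:R.
Proof.
move=> x10.
have m0 : 0 < (m.+1)%:R :> R by rewrite ltr0n.
have := @count_le R m t (x1 * (m.+1)%:R - 2^-1).
set S := \sum_(_ <= _ < _) _ => HS.
have -> : \sum_(1 <= k < m.+1) (nat_of_bool (pval_stat m t (t k) <= x1))%:R = S.
  apply: eq_bigr => k _; congr (nat_of_bool _)%:R.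
  rewrite /pval_stat ler_pdivrMr //.
  set c := \sum_(_ <= _ < _) _.
  by apply/idP/idP => h; lra.
have hx : 0 < x1 * (m.+1)%:R by apply: mulr_gt0.
have h2 : 0 < 2^-1 :> R by rewrite invr_gt0 ltr0n.
case: HS => [->|HS]; lra.
Qed.

Lemma det_bound (R : realType) r (w : 'I_r -> R) (phi : R -> R) (j0 : 'I_r)
  (x1 C dl : R) m (Tall : nat -> 'I_r -> R) :
  (forall j, 0 < w j) ->
  {in `]0, 1[ &, forall x y, x <= y -> phi y <= phi x} ->
  {in `]0, 1[, forall x, 0 < phi x} ->
  x1 \in `]0, 1[ -> C = phi x1 -> dl \in `]0, 1[ ->
  phi dl = 2 * r%:R * (\sum_j w j) * C / w j0 ->
  (0 < m)%N ->
  pval_stat m (fun k => Tall k j0) (Tall 0%N j0) <= dl ->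
  pval_W m (Wstat m (lin_comb w phi) Tall) <= r%:R * x1 * (m.+1)%:R / m%:R.
Proof.
move=> w0 phid phi0 x1in eC dlin phidl m0 p0dl.
set p := fun i j => pval_stat m (fun k => Tall k j) (Tall i j).
have pin i j : p i j \in `]0, 1[.
  by rewrite in_itv /=; apply: pv_bounds.
set W := Wstat m (lin_comb w phi) Tall.
have WE i : W i = \sum_j w j * phi (p i j) by [].
have ws0 : 0 < \sum_j w j.
  by rewrite (bigD1 j0) //= ltr_pwDl // ?w0 // sumr_ge0 // => j _; exact: ltW.
have C0 : 0 < C by rewrite eC; apply: phi0.
have r0 : (0 < r)%N by apply: leq_ltn_trans (ltn_ord j0).
have r1 : 1 <= r%:R :> R by rewrite ler1n.
have W0ge : 2 * r%:R * (\sum_j w j) * C <= W 0%N.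
  rewrite WE [in X in _ <= X](bigD1 j0) //=.
  rewrite -[X in X <= _]addr0; apply: lerD; last first.
    by apply: sumr_ge0 => j _; apply: mulr_ge0; [exact: ltW|exact/ltW/phi0].
  have -> : 2 * r%:R * (\sum_j w j) * C = w j0 * phi dl.
    by rewrite phidl [RHS]mulrC divfK // gt_eqF.
  by apply: ler_wpM2l; [exact: ltW|apply: phid].
have key k : (nat_of_bool (W 0%N <= W k))%:R <= \sum_j (nat_of_bool (p k j <= x1))%:R :> R.
  case: (boolP [exists j, p k j <= x1]) => [/existsP [j hj]|/existsPn hn].
    rewrite (bigD1 j) //= hj /= -[X in X <= _]addr0; apply: lerD.
      by case: (W 0%N <= W k).
    by apply: sumr_ge0 => i _; case: (p k i <= x1).
  have : W k < W 0%N.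
    apply: lt_le_trans W0ge.
    apply: (@le_lt_trans _ _ ((\sum_j w j) * C)).
      rewrite WE mulr_suml; apply: ler_sum => j _.
      apply: ler_wpM2l; first exact: ltW.
      rewrite eC; apply: phid => //; apply: ltW; rewrite ltNge; exact: hn.
    rewrite -mulrA -[X in X < _]mul1r ltr_pM2r; last exact: mulr_gt0.
    lra.
  rewrite ltNge => /negbTE -> /=; apply: sumr_ge0 => j _; by case: (p k j <= x1).
rewrite /pval_W; apply: ler_wpM2r.
  by rewrite invr_ge0 ler0n.
apply: le_trans (ler_sum _ (fun k _ => key k)) _.
rewrite exchange_big /=.
apply: le_trans (ler_sum _ (fun j _ => @pv_count R m (fun k => Tall k j) x1 _)) _.
  by move: x1in; rewrite in_itv /= => /andP [].
by rewrite sumr_const card_ord -(mulr_natl (x1 * _) r) mulrA.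
Qed.

Lemma pv_agree (R : realType) m (t1 t2 : nat -> R) x1 x2 :
  (forall k, (k <= m)%N -> (x1 <= t1 k) = (x2 <= t2 k)) ->
  pval_stat m t1 x1 = pval_stat m t2 x2.
Proof.
move=> h; rewrite /pval_stat; congr ((_ + _) / _).
rewrite big_seq_cond [RHS]big_seq_cond; apply: eq_bigr => k.
by rewrite mem_index_iota andbT => /andP [_ km]; rewrite h.
Qed.

Lemma W_agree (R : realType) r m (psi : ('I_r -> R) -> R) (T1 T2 : nat -> 'I_r -> R) :
  (forall i k j, (i <= m)%N -> (k <= m)%N -> (T1 i j <= T1 k j) = (T2 i j <= T2 k j)) ->
  pval_W m (Wstat m psi T1) = pval_W m (Wstat m psi T2).
Proof.
move=> h.
have hW i : (i <= m)%N -> Wstat m psi T1 i = Wstat m psi T2 i.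
  move=> im; rewrite /Wstat; congr psi; apply: funext => j.
  by apply: pv_agree => k km; apply: h.
rewrite /pval_W; congr (_ / _).
rewrite big_seq_cond [RHS]big_seq_cond; apply: eq_bigr => k.
by rewrite mem_index_iota andbT => /andP [_ km]; rewrite !hW.
Qed.

Lemma ler_set_measurable d (Om : measurableType d) (R : realType) (f g : Om -> R) :
  measurable_fun setT f -> measurable_fun setT g ->
  measurable [set om | f om <= g om].
Proof.
move=> mf mg.
have := measurable_fun_ler mf mg measurableT (Y := [set true]) I.
rewrite setTI; congr measurable; rewrite predeqE => om /=; split => //.
Qed.

Lemma Tall_set_measurable d (Om : measurableType d) (R : realType) r m
  (T : Om -> nat -> 'I_r -> R)
  (mT : forall k j, measurable_fun setT (fun om => T om k j))
  (Q : (nat -> 'I_r -> R) -> Prop) :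
  (forall T1 T2, (forall i k j, (i <= m)%N -> (k <= m)%N ->
      (T1 i j <= T1 k j) = (T2 i j <= T2 k j)) -> Q T1 -> Q T2) ->
  measurable [set om | Q (T om)].
Proof.
move=> HQ.
pose B (x : 'I_m.+1 * 'I_m.+1 * 'I_r) :=
  [set om | T om x.1.1 x.2 <= T om x.1.2 x.2].
apply: (@bits_measurable _ _ _ B _ (enum (@predT ('I_m.+1 * 'I_m.+1 * 'I_r)))).
  by move=> x; apply: ler_set_measurable.
move=> om om' h; apply: HQ => i k j im km.
have := h ((Ordinal (im : (i < m.+1)%N), Ordinal (km : (k < m.+1)%N)), j).
rewrite mem_enum /B /= => /(_ isT) [h1 h2].
by apply/idP/idP.
Qed.

Lemma indic_bool d (Om : measurableType d) (R : realType) (b : Om -> bool) om :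
  \1_[set x | b x] om = (nat_of_bool (b om))%:R :> R.
Proof.
rewrite indicE; case: (boolP (b om)) => h.
  by rewrite (@mem_set _ [set x | b x] om h).
rewrite (@memNset _ [set x | b x] om) //=; exact/negP.
Qed.

Theorem proposition2
  (R : realType) (dO : measure_display) (Om : measurableType dO)
  (P : probability Om R) (r : nat)
  (* data X_n, with values in a measurable space depending on n *)
  (dX : nat -> measure_display) (XT : forall n, measurableType (dX n))
  (X : forall n, Om -> XT n)
  (* resampling randomness V_n^{[k]}, k >= 1 *)
  (dV : nat -> measure_display) (VT : forall n, measurableType (dV n))
  (V : forall n, nat -> Om -> VT n)
  (* test statistics T_n = T_n(X_n) and replicates T_n^{[k]} = T_n^{[k]}(X_n, V_n^{[k]}) *)
  (Tstat : forall n, XT n -> 'I_r -> R)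
  (Tboot : forall n, XT n -> VT n -> 'I_r -> R)
  (* null hypotheses H_0^{(j)} *)
  (H0 : 'I_r -> Prop)
  (M : nat -> nat) (w : 'I_r -> R) (phi : R -> R) (j0 : 'I_r) :
  (* standing assumptions of the setting *)
  (forall n, measurable_fun setT (X n)) ->
  (forall n k, (0 < k)%N -> measurable_fun setT (V n k)) ->
  (forall n j, measurable_fun setT (fun x => Tstat n x j)) ->
  (forall n j, measurable_fun setT (fun xv : (XT n * VT n)%type => Tboot n xv.1 xv.2 j)) ->
  (forall n, indep_data_boot P (X n) (V n)) ->
  (forall n, ident_distr_boot P (V n)) ->
  (* M_n -> oo *)
  (forall K : nat, exists N : nat, forall n, (N <= n)%N -> (K <= M n)%N) ->
  (* (i) *)
  (forall j, 0 < w j) ->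
  {in `]0, 1[ &, forall x y, x <= y -> phi y <= phi x} ->
  {in `]0, 1[, forall x, 0 <= phi x} ->
  {in `]0, 1[ &, injective phi} ->
  {in `]0, 1[, forall x, 0 < phi x} ->
  (forall y, 0 < y -> exists2 x, x \in `]0, 1[ & phi x = y) ->
  (* (ii) *)
  ~ H0 j0 ->
  (fun n => P [set om | Tstat n (X n om) j0 <= Tboot n (X n om) (V n 1%N om) j0])
     @ \oo --> 0%E ->
  (* (iii) *)
  (forall n om j k l, (1 <= k <= M n)%N -> (1 <= l <= M n)%N -> k <> l ->
     Tboot n (X n om) (V n k om) j <> Tboot n (X n om) (V n l om) j) ->
  (* conclusion: p_{n,M_n}(W_{n,M_n}^{[0]}) -> 0 in probability *)
  forall eps : R, 0 < eps ->
  (fun n => P [set om | eps <= `| pval_W (M n)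
       (Wstat (M n) (lin_comb w phi)
          (boot_family (Tstat n) (Tboot n) (X n) (V n) om)) |])
     @ \oo --> 0%E.
Proof.
move=> mX mV mTs mTb indep ident Minf w0 phid phinn phiinj phipos phisurj nH0 q0
  noties eps eps0.
pose Tall n om := boot_family (Tstat n) (Tboot n) (X n) (V n) om.
have mTall n k j : measurable_fun setT (fun om => Tall n om k j).
  case: k => [|k].
    exact: (measurableT_comp (mTs n j) (mX n)).
  exact: (measurableT_comp (mTb n j) (measurable_fun_pair (mX n) (mV n k.+1 isT))).
have r0 : (0 < r)%N by apply: leq_ltn_trans (ltn_ord j0).
have rR0 : 0 < r%:R :> R by rewrite ltr0n.
pose e' := eps / (4 * r%:R).
have e'0 : 0 < e' by apply: divr_gt0 => //; apply: mulr_gt0 => //; rewrite ltr0n.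
pose x1 := e' / (1 + e').
have x10 : 0 < x1 by apply: divr_gt0 => //; lra.
have x1e : x1 <= e' by rewrite /x1 ler_pdivrMr; [nra | lra].
have x1in : x1 \in `]0, 1[.
  by rewrite in_itv /= x10 /= /x1 ltr_pdivrMr; lra.
have rx1 : r%:R * x1 <= eps / 4.
  apply: le_trans (ler_wpM2l (ltW rR0) x1e) _.
  rewrite /e' le_eqVlt; apply/orP; left; apply/eqP.
  by field; rewrite gt_eqF.
pose C := phi x1.
have C0 : 0 < C by apply: phipos.
have ws0 : 0 < \sum_j w j.
  by rewrite (bigD1 j0) //= ltr_pwDl // ?w0 // sumr_ge0 // => j _; exact: ltW.
have Y0 : 0 < 2 * r%:R * (\sum_j w j) * C / w j0.
  by apply: divr_gt0 => //; do 3 apply: mulr_gt0 => //.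
have [dl dlin phidl] := phisurj _ Y0.
have dl0 : 0 < dl by move: dlin; rewrite in_itv /= => /andP [].
pose S n := [set om | eps <= `|pval_W (M n) (Wstat (M n) (lin_comb w phi) (Tall n om))|].
pose E n := [set om | dl < pval_stat (M n) (fun k => Tall n om k j0) (Tall n om 0%N j0)].
pose A n k := [set om | Tall n om 0%N j0 <= Tall n om k j0].
change ((fun n => P (S n)) @ \oo --> 0%E).
have mS n : measurable (S n).
  apply: (@Tall_set_measurable _ _ _ _ (M n) (Tall n) (mTall n)
    (fun T => eps <= `|pval_W (M n) (Wstat (M n) (lin_comb w phi) T)|)).
  by move=> T1 T2 h; rewrite (@W_agree R r (M n) _ T1 T2 h).
have mE n : measurable (E n).
  apply: (@Tall_set_measurable _ _ _ _ (M n) (Tall n) (mTall n)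
    (fun T => dl < pval_stat (M n) (fun k => T k j0) (T 0%N j0))).
  move=> T1 T2 h; rewrite (@pv_agree R (M n) (fun k => T1 k j0) (fun k => T2 k j0) (T1 0%N j0) (T2 0%N j0)) //.
  by move=> k km; apply: h.
have mA n k : measurable (A n k) by apply: ler_set_measurable.
have PA n k : (0 < k)%N -> P (A n k) = P (A n 1%N).
  case: k => [//|k] k0.
  pose Sx := [set xv : XT n * VT n | Tstat n xv.1 j0 <= Tboot n xv.1 xv.2 j0].
  have mSx : measurable Sx.
    apply: ler_set_measurable; last exact: mTb.
    exact: (measurableT_comp (mTs n j0) measurable_fst).
  have bc j B0 : \bigcap_(i in [set` [:: j]]) (V n i @^-1` B0) = V n j @^-1` B0.
    rewrite predeqE => om; split => [h|h i].
      by apply: h; rewrite /= mem_seq1.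
    by rewrite /= mem_seq1 => /eqP ->.
  have rect : forall A0 B0, measurable A0 -> measurable B0 ->
      P (X n @^-1` A0 `&` V n 1%N @^-1` B0) = P (X n @^-1` A0 `&` V n k.+1 @^-1` B0).
    move=> A0 B0 mA0 mB0.
    have h1 := indep n A0 (fun _ => B0) [:: 1%N] mA0 (fun _ => mB0) isT isT.
    have k0' : all (fun k => (0 < k)%N) [:: k.+1] by [].
    have hk := indep n A0 (fun _ => B0) [:: k.+1] mA0 (fun _ => mB0) isT k0'.
    rewrite big_seq1 bc in h1; rewrite big_seq1 bc in hk.
    by rewrite h1 hk (ident n k.+1 B0 k0 mB0).
  have := @eqlaw _ _ _ P _ _ _ _ (X n) (V n 1%N) (V n k.+1) (mX n) (mV n 1%N isT)
    (mV n k.+1 k0) rect Sx mSx.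
  by move=> h; exact: (esym h).
have h20 : 0 < 2^-1 :> R by rewrite invr_gt0 ltr0n.
have markov n : (0 < M n)%N ->
  ((dl * (M n).+1%:R)%:E * P (E n) <= (2^-1 + (M n)%:R * fine (P (A n 1%N)))%:E)%E.
  move=> m0.
  have mEfun : measurable_fun setT (fun om => ((dl * (M n).+1%:R) * \1_(E n) om)%:E).
    apply/measurable_EFinP; apply: measurable_funM; [exact: measurable_cst | exact: measurable_indic].
  have f2m : measurable_fun setT (fun om => ((2^-1)%:E + \sum_(1 <= k < (M n).+1) (\1_(A n k) om : R)%:E)%E).
    have h1 : measurable_fun setT (cst (2^-1)%:E : Om -> \bar R) by exact: measurable_cst.
    have h2 : measurable_fun setT (fun om => \sum_(1 <= k < (M n).+1) (\1_(A n k) om : R)%:E)%E.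
      apply: (@emeasurable_sum _ _ _ setT _ (index_iota 1 (M n).+1) (fun k om => (\1_(A n k) om : R)%:E)) => k.
      apply/measurable_EFinP; exact: measurable_indic.
    exact: (emeasurable_funD h1 h2).
  have ineq : (\int[P]_om ((dl * (M n).+1%:R) * \1_(E n) om)%:E <=
      \int[P]_om ((2^-1)%:E + \sum_(1 <= k < (M n).+1) (\1_(A n k) om : R)%:E))%E.
    apply: ge0_le_integral => //.
      move=> om _; rewrite lee_fin; apply: mulr_ge0.
        by apply: mulr_ge0; [exact: ltW | exact: ler0n].
      by rewrite indicE; case: (om \in E n).
    move=> om _; rewrite sumEFin -EFinD lee_fin.
    have -> : \sum_(1 <= k < (M n).+1) (\1_(A n k) om : R) =
        \sum_(1 <= k < (M n).+1) (nat_of_bool (Tall n om 0%N j0 <= Tall n om k j0))%:R.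
      by apply: eq_bigr => k _; exact: (@indic_bool _ _ R (fun om => Tall n om 0%N j0 <= Tall n om k j0) om).
    have c0 := sum_ind_ge0 R (index_iota 1 (M n).+1) (fun k => Tall n om 0%N j0 <= Tall n om k j0).
    rewrite indicE; case: (boolP (om \in E n)) => hE /=.
      rewrite mulr1; move: hE; rewrite inE /E /= /pval_stat ltr_pdivlMr ?ltr0n //.
      by move=> h; apply: ltW.
    by rewrite mulr0; lra.
  have kneg : dl * (M n).+1%:R < 0 -> E n = set0.
    have : 0 < (M n).+1%:R :> R by rewrite ltr0n.
    by move=> ? ?; exfalso; nra.
  have hZ := @integralZl_indic _ _ R P [set: Om] measurableT (fun _ => E n) (dl * (M n).+1%:R) kneg (mE n).
  rewrite /= in hZ; rewrite hZ integral_indic // setIT in ineq.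
  apply: (le_trans ineq); rewrite le_eqVlt; apply/orP; left; apply/eqP.
  have msum : measurable_fun setT (fun om => \sum_(1 <= k < (M n).+1) (\1_(A n k) om : R)%:E)%E.
    apply: (@emeasurable_sum _ _ _ setT _ (index_iota 1 (M n).+1) (fun k om => (\1_(A n k) om : R)%:E)) => k.
    apply/measurable_EFinP; exact: measurable_indic.
  rewrite (@ge0_integralD _ _ R P [set: Om] measurableT (cst (2^-1)%:E)
     (fun om => \sum_(1 <= k < (M n).+1) (\1_(A n k) om : R)%:E)%E) //; first last.
  - by move=> om _; rewrite sumEFin lee_fin; apply: sumr_ge0 => k _; rewrite indicE; case: (om \in A n k).
  - by move=> om _; rewrite lee_fin; apply: ltW.
  have P1 : (P : measure Om R) [set: Om] = 1%E := probability_setT P.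
  rewrite integral_cst // P1 mule1.
  have hm : forall k, measurable_fun setT (fun om => (\1_(A n k) om : R)%:E).
    by move=> k; apply/measurable_EFinP; exact: measurable_indic.
  have h0 : forall k om, [set: Om] om -> (0 <= (\1_(A n k) om : R)%:E)%E.
    by move=> k om _; rewrite lee_fin; rewrite indicE; case: (om \in A n k).
  rewrite (@ge0_integral_sum _ _ R P [set: Om] measurableT _ (fun k om => (\1_(A n k) om : R)%:E) hm h0).
  rewrite big_seq_cond (eq_bigr (fun _ => (fine (P (A n 1%N)))%:E)); last first.
    move=> k; rewrite mem_index_iota andbT => /andP [k1 _].
    have := integral_indic P measurableT (mA n k); rewrite setIT => ->.
    rewrite fineK ?fin_num_measure //; exact: PA n k k1.
  rewrite -big_seq_cond sumEFin sumr_const_nat subn1 /= -EFinD.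
  by rewrite mulr_natl.
have bound n : (0 < M n)%N ->
    fine (P (S n)) <= (2 * dl * (M n).+1%:R)^-1 + fine (P (A n 1%N)) / dl.
  move=> m0.
  have mpos : 1 <= (M n)%:R :> R by rewrite ler1n.
  have SE : (P (S n) <= P (E n))%E.
    apply: le_measure; rewrite ?inE; [exact: mS | exact: mE | ].
    move=> om /= hS; rewrite /E /= ltNge; apply/negP => hle.
    have := @det_bound R r w phi j0 x1 C dl (M n) (Tall n om) w0 phid phipos x1in
      erefl dlin phidl m0 hle.
    set pw := pval_W _ _ => hpw.
    have pw0 : 0 <= pw.
      by apply: divr_ge0; [apply: sum_ind_ge0 | exact: ler0n].
    have : pw < eps.
      apply: (le_lt_trans hpw).
      rewrite ltr_pdivrMr ?ltr0n // -natr1.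
      have : 0 <= x1 by exact: ltW.
      nra.
    move=> hlt; move: hS; rewrite /S /= ger0_norm // => hS.
    by have := lt_le_trans hlt hS; rewrite ltxx.
  have hE := fin_num_measure P (E n) (mE n).
  have hS := fin_num_measure P (S n) (mS n).
  have hA := fin_num_measure P (A n 1%N) (mA n 1%N).
  apply: (le_trans (fine_le hS hE SE)).
  have ME : (dl * (M n).+1%:R) * fine (P (E n)) <= 2^-1 + (M n)%:R * fine (P (A n 1%N)).
    by rewrite -lee_fin EFinM fineK //; exact: markov.
  have q0' : 0 <= fine (P (A n 1%N)) by apply: fine_ge0; exact: measure_ge0.
  have m1 : 0 < (M n).+1%:R :> R by rewrite ltr0n.
  have a0 : 0 < dl * (M n).+1%:R by apply: mulr_gt0.
  have hkey : fine (P (E n)) <= (2^-1 + (M n).+1%:R * fine (P (A n 1%N))) / (dl * (M n).+1%:R).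
    rewrite ler_pdivlMr // mulrC; apply: (le_trans ME); rewrite lerD2l; apply: ler_wpM2r => //; by rewrite ler_nat leqnSn.
  apply: (le_trans hkey); rewrite le_eqVlt; apply/orP; left; apply/eqP.
  by field; rewrite ?gt_eqF //; apply/andP; split; rewrite gt_eqF.
apply/fine_cvgP; split.
  by apply: nearW => n; exact: fin_num_measure.
have [N hN] := Minf 1%N.
apply: (@squeeze_cvgr _ _ _ _ (cst 0) (fun n => (2 * dl * (M n).+1%:R)^-1 + fine (P (A n 1%N)) / dl)).
- apply: (@filterS _ _ _ (fun n => (N <= n)%N)); last by exists N.
  move=> n /= Nn; apply/andP; split.
    by apply: fine_ge0; exact: measure_ge0.
  exact: bound n (hN n Nn).
- by apply/cvgrPdist_le => e e0; apply: nearW => n; rewrite /cst subrr normr0 ltW.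
rewrite -[0]addr0; apply: cvgD.
  apply/cvgrPdist_le => e e0.
  have [N' hN'] := Minf (Num.truncn ((2 * dl * e)^-1)).
  apply: (@filterS _ _ _ (fun n => (N' <= n)%N)); last by exists N'.
  move=> n /= Nn.
  have := truncnS_gt ((2 * dl * e)^-1).
  have := hN' n Nn; rewrite -(ler_nat R) => hM.
  rewrite -[X in X < _]mul1r ltr_pdivrMr; last by apply: mulr_gt0 => //; apply: mulr_gt0.
  move=> h1.
  have m1 : 0 < (M n).+1%:R :> R by rewrite ltr0n.
  rewrite sub0r normrN ger0_norm; last first.
    by rewrite invr_ge0; apply: mulr_ge0; [apply: mulr_ge0 => //; exact: ltW | exact: ltW].
  rewrite -[X in X <= _]mul1r ler_pdivrMr; last by apply: mulr_gt0 => //; apply: mulr_gt0.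
  rewrite -natr1 in m1 h1 *.
  have p : 0 < 2 * dl * e by apply: mulr_gt0 => //; apply: mulr_gt0.
  nra.
rewrite -(mul0r dl^-1); apply: cvgMr_tmp.
by have /fine_cvgP [_ qf] := q0.
Qed.
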